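(* Let $\Lambda=(\lambda_1,\lambda_2)\in(0,\infty)^2$, $\phi\in[0,1)$ and $0\le\theta<\theta'\le 1$. Let $(X_1,X_2)\sim\mathcal{BZIP}^-(\Lambda,\theta,\phi)$ and $(X_1',X_2')\sim\mathcal{BZIP}^-(\Lambda,\theta',\phi)$. Then $(X_1',X_2')\prec_{PQD}(X_1,X_2)$, i.e. $H^-_{\Lambda,\phi,\theta'}(x_1,x_2)\le H^-_{\Lambda,\phi,\theta}(x_1,x_2)$ for all $(x_1,x_2)\in\mathbb{R}^2$, where $H^-_{\Lambda,\phi,\vartheta}$ is the joint distribution function of $\mathcal{BZIP}^-(\Lambda,\vartheta,\phi)$.
   Context: For $\mu>0$, $G_\mu$ denotes the distribution function of the Poisson distribution with mean $\mu$, and $G_\mu^{-1}(u)=\inf\{x\in\mathbb{N}:G_\mu(x)\ge u\}$ its quantile function (for $\mu=0$, $G_0^{-1}\equiv 0$). The model $\mathcal{BZIP}^{\pm}(\Lambda,\theta,\phi)$, with $\Lambda=(\lambda_1,\lambda_2)\in(0,\infty)^2$, $\theta\in[0,1]$, $\phi\in[0,1)$, is the law of $(X_1,X_2)=W\,(T_1,T_2)$, where: $W\sim$ Bernoulli$(1-\phi)$; $T_j=Y_j+Z_j$ for $j=1,2$; $Y_j\sim\mathcal{P}((1-\theta)\lambda_j)$; $U\sim\mathcal U(0,1)$; in $\mathcal{BZIP}^+$, $(Z_1,Z_2)=(G^{-1}_{\theta\lambda_1}(U),G^{-1}_{\theta\lambda_2}(U))$, and in $\mathcal{BZIP}^-$,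 $(Z_1,Z_2)=(G^{-1}_{\theta\lambda_1}(U),G^{-1}_{\theta\lambda_2}(1-U))$; $W$, $Y_1$, $Y_2$, $U$ are mutually independent. For random pairs with the same marginals, $(A_1,A_2)\prec_{PQD}(B_1,B_2)$ means $P(A_1\le x_1,A_2\le x_2)\le P(B_1\le x_1,B_2\le x_2)$ for all $x_1,x_2$. *)

(* Defs.v *)
From HB Require Import structures.
From mathcomp Require Import all_boot all_order all_algebra.
From mathcomp Require Import all_classical all_reals all_analysis.
Set Implicit Arguments. Unset Strict Implicit. Unset Printing Implicit Defensive.
Import Order.TTheory GRing.Theory Num.Theory.
Local Open Scope classical_set_scope.
Local Open Scope ring_scope.

(* Poisson probability mass function with mean mu >= 0 (0^0 = 1, so mu = 0
   gives the point mass at 0). *)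
Definition poisson_pmf (R : realType) (mu : R) (k : nat) : R :=
  expR (- mu) * mu ^+ k / (k`!)%:R.

Definition poisson_cdf (R : realType) (mu : R) (x : nat) : R :=
  \sum_(k < x.+1) poisson_pmf mu k.

(* Quantile function G_mu^{-1}(u) = inf {x in N : G_mu(x) >= u};
   G_0^{-1} = 0.  When the set is empty (only possible for u >= 1, a null
   event for a uniform U) we return 0 by convention. *)
Definition poisson_quantile (R : realType) (mu u : R) : nat :=
  if mu == 0 then 0%N else
  match pselect (exists x : nat, u <= poisson_cdf mu x) with
  | left h => ex_minn h
  | right _ => 0%N
  end.

Definition BZIPm_inputs (R : realType) (d : measure_display) (T : measurableType d)
  (P : probability T R) (W Y1 Y2 U : T -> R) (lam1 lam2 theta phi : R) : Prop :=
  [/\ measurable_fun setT W, measurable_fun setT Y1, measurable_fun setT Y2,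
      measurable_fun setT U &
  [/\
      P [set t | W t = 1] = (1 - phi)%:E /\ P [set t | W t = 0] = phi%:E,
      (forall k : nat, P [set t | Y1 t = k%:R] = (poisson_pmf ((1 - theta) * lam1) k)%:E),
      (forall k : nat, P [set t | Y2 t = k%:R] = (poisson_pmf ((1 - theta) * lam2) k)%:E),
      (forall r : R, 0 <= r <= 1 -> P [set t | U t <= r] = r%:E) &
      (forall A B C D : set R, measurable A -> measurable B -> measurable C ->
         measurable D ->
         P (W @^-1` A `&` Y1 @^-1` B `&` Y2 @^-1` C `&` U @^-1` D) =
         (P (W @^-1` A) * P (Y1 @^-1` B) * P (Y2 @^-1` C) * P (U @^-1` D))%E)]].

Definition BZIPm_X1 (R : realType) (T : Type) (W Y1 U : T -> R) (lam1 theta : R)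
  (t : T) : R :=
  W t * (Y1 t + (poisson_quantile (theta * lam1) (U t))%:R).
Definition BZIPm_X2 (R : realType) (T : Type) (W Y2 U : T -> R) (lam2 theta : R)
  (t : T) : R :=
  W t * (Y2 t + (poisson_quantile (theta * lam2) (1 - U t))%:R).

Definition joint_cdf (R : realType) (d : measure_display) (T : measurableType d)
  (P : probability T R) (X1 X2 : T -> R) (x1 x2 : R) : \bar R :=
  P [set t | X1 t <= x1 /\ X2 t <= x2].

(* Main.v *)
Require Import Defs.
From HB Require Import structures.
From mathcomp Require Import all_boot all_order all_algebra.
From mathcomp Require Import all_classical all_reals all_analysis.
From mathcomp Require Import ring lra.
Import Order.TTheory GRing.Theory Num.Theory.
Local Open Scope classical_set_scope.
Local Open Scope ring_scope.
Set Implicit Arguments. Unset Strict Implicit. Unset Printing Implicit Defensive.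

Notation pmf := Defs.poisson_pmf.
Notation cdf := Defs.poisson_cdf.
Notation qf := Defs.poisson_quantile.


Lemma ppmf_ge0 (R : realType) (mu : R) k : 0 <= mu -> 0 <= pmf mu k.
Proof. by move=> h; rewrite /Defs.poisson_pmf divr_ge0 ?mulr_ge0 ?expR_ge0 ?exprn_ge0. Qed.

Lemma cdfE (R : realType) (mu : R) n :
  cdf mu n = \sum_(0 <= k < n.+1) pmf mu k.
Proof. by rewrite /Defs.poisson_cdf big_mkord. Qed.

Lemma cdf_ge0 (R : realType) (mu : R) n : 0 <= mu -> 0 <= cdf mu n.
Proof. move=> h; rewrite /Defs.poisson_cdf sumr_ge0 // => i _; exact: ppmf_ge0. Qed.

Lemma cdf_series (R : realType) (mu : R) n :
  cdf mu n = expR (- mu) * series (exp_coeff mu) n.+1.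
Proof.
rewrite cdfE /series /= mulr_sumr; apply: eq_bigr => k _.
by rewrite /Defs.poisson_pmf /exp_coeff /= mulrA.
Qed.

Lemma tri (R : realType) (f : nat -> nat -> R) S :
  \sum_(0 <= n < S.+1) \sum_(0 <= i < n.+1) f i (n - i)%N =
  \sum_(0 <= i < S.+1) \sum_(0 <= j < (S - i)%N.+1) f i j.
Proof.
elim: S => [|S IH]; first by rewrite !big_nat1.
rewrite big_nat_recr //= IH [RHS]big_nat_recr //= subnn big_nat1.
under [in RHS]eq_big_nat => i /andP[_ hi] do rewrite subSn // big_nat_recr //=.
rewrite big_split /= -addrA; congr (_ + _).
rewrite big_nat_recr //= subnn; congr (_ + _).
by apply: eq_big_nat => i /andP[_ hi]; rewrite subSn.
Qed.

Lemma pmfD (R : realType) (x y : R) n :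
  pmf (x + y) n = \sum_(0 <= i < n.+1) pmf x i * pmf y (n - i)%N.
Proof.
rewrite /Defs.poisson_pmf (addrC x y) exprDn big_mkord mulr_sumr mulr_suml.
apply: eq_bigr => -[i /= hi] _.
have hin : (i <= n)%N by [].
have hb : ('C(n, i))%:R * (i`!%:R * (n - i)`!%:R) = n`!%:R :> R.
  by rewrite -!natrM bin_fact.
have f1 : (i`!%:R : R) != 0 by rewrite pnatr_eq0 -lt0n fact_gt0.
have f2 : ((n - i)`!%:R : R) != 0 by rewrite pnatr_eq0 -lt0n fact_gt0.
rewrite -hb mulr_natr opprD expRD.
field.
by rewrite f1 f2 /= pnatr_eq0 -lt0n bin_gt0.
Qed.

Lemma conv1 (R : realType) (x y : R) (h : nat -> R) K :
  \sum_(0 <= k < K.+1) pmf (x + y) k * h (K - k)%N =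
  \sum_(0 <= i < K.+1) pmf x i * \sum_(0 <= j < (K - i).+1) pmf y j * h (K - i - j)%N.
Proof.
pose f i j := pmf x i * pmf y j * h (K - (i + j))%N.
transitivity (\sum_(0 <= k < K.+1) \sum_(0 <= i < k.+1) f i (k - i)%N).
  apply: eq_bigr => k _; rewrite pmfD mulr_suml.
  by apply: eq_big_nat => i /andP[_ hi]; rewrite /f subnKC.
rewrite tri; apply: eq_bigr => i _; rewrite mulr_sumr; apply: eq_bigr => j _.
by rewrite /f subnDA mulrA.
Qed.


Lemma cdfD (R : realType) (x y : R) S :
  cdf (x + y) S = \sum_(0 <= i < S.+1) pmf x i * cdf y (S - i)%N.
Proof.
have := @conv1 R x y (fun _ => 1) S; rewrite /= => H.
rewrite cdfE (eq_bigr (fun k => pmf (x + y) k * 1)); last by move=> k _; rewrite mulr1.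
rewrite H; apply: eq_bigr => i _; rewrite cdfE; congr (_ * _).
by apply: eq_bigr => j _; rewrite mulr1.
Qed.


Lemma series_exp_nd (R : realType) (mu : R) : 0 <= mu ->
  {homo series (exp_coeff mu) : n m / (n <= m)%N >-> n <= m}.
Proof.
move=> h n m nm; rewrite /series /= (big_cat_nat (leq0n n) nm) /= lerDl.
by apply: sumr_ge0 => i _; apply: exp_coeff_ge0.
Qed.
Lemma cdf_le1 (R : realType) (mu : R) n : 0 <= mu -> cdf mu n <= 1.
Proof.
move=> h; rewrite cdf_series -(expRxMexpNx_1 mu) mulrC ler_wpM2r ?expR_ge0 //.
have := nondecreasing_cvgn_le (series_exp_nd h) (is_cvg_series_exp_coeff mu) n.+1.
by [].
Qed.
Lemma cdf_mono (R : realType) (mu : R) m n : 0 <= mu -> (m <= n)%N -> cdf mu m <= cdf mu n.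
Proof.
move=> h mn; rewrite !cdf_series ler_wpM2l ?expR_ge0 //.
by apply: series_exp_nd.
Qed.
Lemma cdf_near1 (R : realType) (mu : R) e : 0 <= mu -> 0 < e ->
  exists n, 1 - e < cdf mu n.
Proof.
move=> h e0.
have hlt : expR mu * (1 - e / 2) < expR mu.
  rewrite -[ltRHS]mulr1 ltr_pM2l ?expR_gt0 //.
  by rewrite gtrBl divr_gt0.
have [N _ HN] := lt_lim (series_exp_nd h) (is_cvg_series_exp_coeff mu) hlt.
exists N; rewrite cdf_series.
have := HN N.+1 (leqnSn N); rewrite /= => hN.
apply: (@lt_le_trans _ _ (expR (- mu) * (expR mu * (1 - e / 2)))).
  rewrite mulrA (mulrC (expR (- mu))) expRxMexpNx_1 mul1r.
  by rewrite ltrD2l ltrN2 gtr_pMr ?invf_lt1 ?ltr1n.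
by rewrite ler_wpM2l ?expR_ge0.
Qed.

Definition Lf (R : realType) (a1 a2 : R) (m n : nat) : R :=
  Num.max 0 (cdf a1 m + cdf a2 n - 1).

Lemma Lf_ge0 (R : realType) (a1 a2 : R) m n : 0 <= Lf a1 a2 m n.
Proof. by rewrite /Lf le_max lexx. Qed.

Lemma sum_lin (R : realType) (p g : nat -> R) (c : R) N :
  \sum_(0 <= j < N) p j * (g j + c) =
  \sum_(0 <= j < N) p j * g j + c * \sum_(0 <= j < N) p j.
Proof.
rewrite mulr_sumr -big_split /=; apply: eq_bigr => j _; ring.
Qed.

Lemma frechet (R : realType) (a1 a2 c1 c2 : R) S T :
  0 <= a1 -> 0 <= a2 -> 0 <= c1 -> 0 <= c2 ->
  Lf (a1 + c1) (a2 + c2) S T <=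
  \sum_(0 <= j < S.+1) pmf c1 j *
     \sum_(0 <= j' < T.+1) pmf c2 j' * Lf a1 a2 (S - j)%N (T - j')%N.
Proof.
move=> ha1 ha2 hc1 hc2.
set A := \sum_(0 <= j < S.+1) pmf c1 j.
set B := \sum_(0 <= j < T.+1) pmf c2 j.
set g1 := \sum_(0 <= j < S.+1) pmf c1 j * cdf a1 (S - j)%N.
set g2 := \sum_(0 <= j < T.+1) pmf c2 j * cdf a2 (T - j)%N.
have eg1 : cdf (a1 + c1) S = g1 by rewrite addrC cdfD.
have eg2 : cdf (a2 + c2) T = g2 by rewrite addrC cdfD.
have hA1 : A <= 1 by rewrite /A -cdfE cdf_le1.
have hB1 : B <= 1 by rewrite /B -cdfE cdf_le1.
have hgA : g1 <= A.
  rewrite /g1 /A; apply: ler_sum => j _.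
  by rewrite -[leRHS]mulr1; apply: ler_wpM2l; [exact: ppmf_ge0| exact: cdf_le1].
have hgB : g2 <= B.
  rewrite /g2 /B; apply: ler_sum => j _.
  by rewrite -[leRHS]mulr1; apply: ler_wpM2l; rewrite ?ppmf_ge0 ?cdf_le1.
have R0 : 0 <= \sum_(0 <= j < S.+1) pmf c1 j *
     \sum_(0 <= j' < T.+1) pmf c2 j' * Lf a1 a2 (S - j)%N (T - j')%N.
  apply: sumr_ge0 => j _; apply: mulr_ge0; first exact: ppmf_ge0.
  by apply: sumr_ge0 => j' _; apply: mulr_ge0; [exact: ppmf_ge0| exact: Lf_ge0].
have R1 : \sum_(0 <= j < S.+1) pmf c1 j *
     \sum_(0 <= j' < T.+1) pmf c2 j' * (cdf a2 (T - j')%N + (cdf a1 (S - j)%N - 1))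
   <= \sum_(0 <= j < S.+1) pmf c1 j *
     \sum_(0 <= j' < T.+1) pmf c2 j' * Lf a1 a2 (S - j)%N (T - j')%N.
  apply: ler_sum => j _; apply: ler_wpM2l; first exact: ppmf_ge0.
  apply: ler_sum => j' _; apply: ler_wpM2l; first exact: ppmf_ge0.
  by rewrite /Lf le_max; apply/orP; right; rewrite addrA (addrC (cdf a2 _)).
have E1 : \sum_(0 <= j < S.+1) pmf c1 j *
     \sum_(0 <= j' < T.+1) pmf c2 j' * (cdf a2 (T - j')%N + (cdf a1 (S - j)%N - 1))
     = B * g1 + A * g2 - A * B.
  under eq_bigr => j _ do rewrite sum_lin.
  rewrite -/g2 -/B.
  transitivity (\sum_(0 <= j < S.+1) (pmf c1 j * g2 +
       B * (pmf c1 j * cdf a1 (S - j)%N - pmf c1 j))).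
    by apply: eq_bigr => j _; ring.
  rewrite big_split /= -mulr_suml -mulr_sumr sumrB -/A -/g1.
  ring.
rewrite /Lf ge_max R0 /= eg1 eg2 (le_trans _ R1) // E1.
have h1 : 0 <= (1 - B) * (A - g1) by apply: mulr_ge0; lra.
have h2 : 0 <= (1 - A) * (B - g2) by apply: mulr_ge0; lra.
have h3 : 0 <= (1 - A) * (1 - B) by apply: mulr_ge0; lra.
lra.
Qed.

Definition Phi (R : realType) (b1 b2 a1 a2 : R) (K L : nat) : R :=
  \sum_(0 <= k < K.+1) pmf b1 k *
     \sum_(0 <= l < L.+1) pmf b2 l * Lf a1 a2 (K - k)%N (L - l)%N.

Lemma Phi_mono (R : realType) (b1 b2 a1 a2 c1 c2 : R) K L :
  0 <= b1 -> 0 <= b2 -> 0 <= a1 -> 0 <= a2 -> 0 <= c1 -> 0 <= c2 ->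
  Phi b1 b2 (a1 + c1) (a2 + c2) K L <= Phi (b1 + c1) (b2 + c2) a1 a2 K L.
Proof.
move=> hb1 hb2 ha1 ha2 hc1 hc2.
have H := @conv1 R b1 c1
  (fun m => \sum_(0 <= l < L.+1) pmf (b2 + c2) l * Lf a1 a2 m (L - l)%N) K.
rewrite /= in H; rewrite /Phi H; apply: ler_sum => i _.
apply: ler_wpM2l; first exact: ppmf_ge0.
have E j : \sum_(0 <= l < L.+1) pmf (b2 + c2) l * Lf a1 a2 (K - i - j)%N (L - l)%N =
    \sum_(0 <= i' < L.+1) pmf b2 i' * \sum_(0 <= j' < (L - i').+1)
       pmf c2 j' * Lf a1 a2 (K - i - j)%N (L - i' - j')%N.
  have H2 := @conv1 R b2 c2 (fun n => Lf a1 a2 (K - i - j)%N n) L.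
  by rewrite /= in H2; rewrite H2.
under [in X in _ <= X]eq_bigr => j _ do rewrite E.
under [in X in _ <= X]eq_bigr => j _ do rewrite mulr_sumr.
rewrite exchange_big /=; apply: ler_sum => i' _.
under [in X in _ <= X]eq_bigr => j _ do rewrite mulrCA.
rewrite -mulr_sumr; apply: ler_wpM2l; first exact: ppmf_ge0.
have F := frechet (K - i) (L - i') ha1 ha2 hc1 hc2.
apply: (le_trans F); apply: ler_sum => j _; apply: ler_wpM2l; first exact: ppmf_ge0.
by apply: ler_sum => jj _; rewrite lexx.
Qed.


Definition pr (R : realType) (d : measure_display) (T : measurableType d)
  (P : probability T R) (A : set T) : R := fine (P A).

Lemma prE (R : realType) (d : measure_display) (T : measurableType d)
  (P : probability T R) (A : set T) : measurable A -> P A = (pr P A)%:E.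
Proof. by move=> mA; rewrite /pr fineK // fin_num_measure. Qed.

Lemma pr_ge0 (R : realType) (d : measure_display) (T : measurableType d)
  (P : probability T R) (A : set T) : measurable A -> 0 <= pr P A.
Proof. by move=> mA; rewrite -lee_fin -prE. Qed.

Lemma pr_le1 (R : realType) (d : measure_display) (T : measurableType d)
  (P : probability T R) (A : set T) : measurable A -> pr P A <= 1.
Proof. by move=> mA; rewrite -lee_fin -prE // probability_le1. Qed.

Lemma prT (R : realType) (d : measure_display) (T : measurableType d)
  (P : probability T R) : pr P setT = 1.
Proof. by rewrite /pr probability_setT. Qed.

Lemma prU (R : realType) (d : measure_display) (T : measurableType d)
  (P : probability T R) (A B : set T) : measurable A -> measurable B ->
  A `&` B = set0 -> pr P (A `|` B) = pr P A + pr P B.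
Proof.
move=> mA mB AB; have mAB : measurable (A `|` B) by apply: measurableU.
apply: EFin_inj; rewrite EFinD -!prE //; exact: measureU.
Qed.

Lemma pr_le (R : realType) (d : measure_display) (T : measurableType d)
  (P : probability T R) (A B : set T) : measurable A -> measurable B ->
  A `<=` B -> pr P A <= pr P B.
Proof. by move=> mA mB AB; rewrite -lee_fin -!prE // le_measure // inE. Qed.

Lemma pr_subU (R : realType) (d : measure_display) (T : measurableType d)
  (P : probability T R) (A B : set T) : measurable A -> measurable B ->
  pr P (A `|` B) <= pr P A + pr P B.
Proof.
move=> mA mB; have mAB : measurable (A `|` B) by apply: measurableU.
rewrite -lee_fin -prE // EFinD -!prE //.
exact: measureU2.
Qed.

Lemma pr_bigU (R : realType) (d : measure_display) (T : measurableType d)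
  (P : probability T R) n (F : nat -> set T) :
  (forall i, measurable (F i)) ->
  (forall i j, i != j -> F i `&` F j = set0) ->
  pr P (\big[setU/set0]_(i < n) F i) = \sum_(i < n) pr P (F i).
Proof.
move=> mF dF.
have mB : measurable (\big[setU/set0]_(i < n) F i).
  by apply: bigsetU_measurable => i _.
apply: EFin_inj; rewrite -prE // -sumEFin.
rewrite (eq_bigr (fun i : 'I_n => P (F i))); last by move=> i _; rewrite (prE P (mF i)).
have tF : trivIset setT (fun i : 'I_n => F i).
  move=> i j _ _ [x hx]; apply/eqP; apply: contraT => hij.
  have hij' : (nat_of_ord i != nat_of_ord j) by [].
  by move: hx; rewrite (dF _ _ hij').
by rewrite measure_bigsetU_ord.
Qed.


Lemma cdf0_ge1 (R : realType) m : 1 <= cdf (0 : R) m.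
Proof.
have -> : 1 = cdf (0 : R) 0.
  by rewrite /Defs.poisson_cdf big_ord1 /Defs.poisson_pmf oppr0 expR0 expr0 mul1r divr1.
by apply: cdf_mono.
Qed.

Lemma q_le (R : realType) (mu u : R) m : u <= cdf mu m -> (qf mu u <= m)%N.
Proof.
move=> hu; rewrite /Defs.poisson_quantile; case: eqP => // _.
case: pselect => [h|h] //; case: ex_minnP => n _ hmin; exact: hmin.
Qed.

Lemma q_ge (R : realType) (mu u : R) m : 0 <= mu -> u < 1 ->
  (qf mu u <= m)%N -> u <= cdf mu m.
Proof.
move=> h0 hu; rewrite /Defs.poisson_quantile; case: eqP => [->|hmu].
  by move=> _; apply: (le_trans (ltW hu)); apply: cdf0_ge1.
case: pselect => [h|h].
  case: ex_minnP => n hn _ hnm; apply: (le_trans hn); exact: cdf_mono.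
move=> _; exfalso; apply: h.
have hu' : 0 < 1 - u by rewrite subr_gt0.
have [n hn] := cdf_near1 h0 hu'.
by exists n; apply: ltW; move: hn; rewrite opprB addrCA subrr addr0.
Qed.

Lemma mle (R : realType) (c : R) : measurable [set u : R | u <= c].
Proof.
have -> : [set u : R | u <= c] = [set` `]-oo, c]] by apply/seteqP; split => u /=; rewrite in_itv.
exact: measurable_itv.
Qed.

Lemma mge (R : realType) (c : R) : measurable [set u : R | c <= u].
Proof.
have -> : [set u : R | c <= u] = [set` `[c, +oo[] by apply/seteqP; split => u /=; rewrite in_itv /= andbT.
exact: measurable_itv.
Qed.

Lemma mgt (R : realType) (c : R) : measurable [set u : R | c < u].
Proof.
have -> : [set u : R | c < u] = [set` `]c, +oo[] by apply/seteqP; split => u /=; rewrite in_itv /= andbT.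
exact: measurable_itv.
Qed.

Lemma mlt (R : realType) (c : R) : measurable [set u : R | u < c].
Proof.
have -> : [set u : R | u < c] = [set` `]-oo, c[] by apply/seteqP; split => u /=; rewrite in_itv.
exact: measurable_itv.
Qed.

Lemma mqn (R : realType) (mu : R) n : 0 <= mu -> measurable [set u : R | qf mu u = n].
Proof.
move=> h0.
have [->|mu0] := eqVneq mu 0.
  have -> : [set u : R | qf 0 u = n] = if n == 0%N then setT else set0.
    rewrite /Defs.poisson_quantile eqxx; case: eqP => [<-|hn]; apply/seteqP; split => u //=.
    by move/esym.
  by case: (n == 0%N); [exact: measurableT| exact: measurable0].
pose Ex := \bigcup_x [set u : R | u <= cdf mu x].
pose Cn (k : nat) := if k is n'.+1 then [set u : R | cdf mu n' < u] else setT.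
have -> : [set u : R | qf mu u = n] =
  (Ex `&` [set u | u <= cdf mu n] `&` Cn n) `|` (~` Ex `&` [set _ | n = 0%N]).
  apply/seteqP; split => u /=; rewrite /Defs.poisson_quantile (negbTE mu0).
  - case: pselect => [h|h].
      case: ex_minnP => m hm hmin <-; left; split; first split.
      + by have [x hx] := h; exists x.
      + exact: hm.
      + case: m hm hmin => [//|m'] hm hmin /=; rewrite ltNge; apply/negP => hle.
        by have := hmin m' hle; rewrite ltnn.
    move=> <-; right; split => //; move=> [x _ hx]; apply: h; by exists x.
  - case=> [[[[x _ hx] hn] hc]|[hnex ->]].
      case: pselect => [h|h]; last by exfalso; apply: h; exists x.
      case: ex_minnP => m hm hmin; apply/eqP; rewrite eqn_leq hmin //=.
      move: hc; rewrite /Cn; case: n hn {hmin} => [//|n'] hn hc.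
      rewrite ltnNge; apply/negP => hmn.
      by have := le_lt_trans (le_trans hm (cdf_mono h0 hmn)) hc; rewrite ltxx.
    case: pselect => [h|//]; exfalso; apply: hnex; have [x hx] := h; by exists x.
apply: measurableU; apply: measurableI.
- apply: measurableI; last exact: mle.
  by apply: bigcupT_measurable => x; apply: mle.
- by rewrite /Cn; case: n => [|n']; [exact: measurableT | exact: mgt].
- by apply: measurableC; apply: bigcupT_measurable => x; apply: mle.
- by case: n => [|n']; [rewrite (_ : [set _ | _] = setT) // ; apply/seteqP|
    rewrite (_ : [set _ | _] = set0) //; apply/seteqP; split => u //=].
Qed.

Lemma mq (R : realType) (mu : R) : 0 <= mu ->
  measurable_fun setT (fun u : R => ((qf mu u)%:R : R)).
Proof.
move=> h0 _ B mB; rewrite setTI.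
have -> : (fun u : R => ((qf mu u)%:R : R)) @^-1` B =
    \bigcup_n ([set u : R | qf mu u = n] `&` [set _ | B n%:R]).
  apply/seteqP; split => u /=.
    by move=> hB; exists (qf mu u) => //.
  by move=> [n _ [<- hB]].
apply: bigcupT_measurable => n; apply: measurableI; first exact: mqn.
case: (pselect (B n%:R)) => hB.
  have -> : [set _ : R | B n%:R] = setT by apply/seteqP; split => u.
  exact: measurableT.
have -> : [set _ : R | B n%:R] = set0 by apply/seteqP; split => u.
exact: measurable0.
Qed.

Lemma mX1 (R : realType) (d : measure_display) (T : measurableType d)
  (W Y U : T -> R) lam th : 0 <= th * lam ->
  measurable_fun setT W -> measurable_fun setT Y -> measurable_fun setT U ->
  measurable_fun setT (Defs.BZIPm_X1 W Y U lam th).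
Proof.
move=> h mW mY mU; apply: measurable_realfun.measurable_funM => //; apply: measurable_realfun.measurable_funD => //.
exact: (measurableT_comp (mq h) mU).
Qed.

Lemma mX2 (R : realType) (d : measure_display) (T : measurableType d)
  (W Y U : T -> R) lam th : 0 <= th * lam ->
  measurable_fun setT W -> measurable_fun setT Y -> measurable_fun setT U ->
  measurable_fun setT (Defs.BZIPm_X2 W Y U lam th).
Proof.
move=> h mW mY mU; apply: measurable_realfun.measurable_funM => //; apply: measurable_realfun.measurable_funD => //.
apply: (measurableT_comp (mq h)); apply: measurable_realfun.measurable_funB => //.
Qed.

Lemma mE (R : realType) (d : measure_display) (T : measurableType d)
  (X1 X2 : T -> R) x1 x2 :
  measurable_fun setT X1 -> measurable_fun setT X2 ->
  measurable [set t | X1 t <= x1 /\ X2 t <= x2].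
Proof.
move=> m1 m2.
have -> : [set t | X1 t <= x1 /\ X2 t <= x2] =
  (setT `&` X1 @^-1` [set u | u <= x1]) `&` (setT `&` X2 @^-1` [set u | u <= x2]).
  by apply/seteqP; split => t /=; [case=> a b| case=> [[_ a] [_ b]]].
apply: measurableI; [apply: m1 | apply: m2]; try exact: measurableT; exact: mle.
Qed.


Lemma mpre (R : realType) (d : measure_display) (T : measurableType d)
  (f : T -> R) (B : set R) : measurable_fun setT f -> measurable B ->
  measurable (f @^-1` B).
Proof. by move=> mf mB; rewrite -[f @^-1` B]setTI; apply: mf. Qed.

Lemma mem_big (T : Type) n (F : nat -> set T) i t :
  (i < n)%N -> F i t -> (\big[setU/set0]_(j < n) F j) t.
Proof. by move=> hi hF; rewrite -bigcup_mkord; exists i. Qed.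

Lemma big_mem (T : Type) n (F : nat -> set T) t :
  (\big[setU/set0]_(j < n) F j) t -> exists2 i, (i < n)%N & F i t.
Proof. by rewrite -bigcup_mkord => -[i hi hF]; exists i. Qed.

Lemma le0_eps (R : realType) (x : R) :
  (forall e, 0 < e -> exists s, 1 - e < s /\ x + s <= 1) -> x <= 0.
Proof.
move=> H; rewrite leNgt; apply/negP => hx.
have [s [h1 h2]] := H x hx; lra.
Qed.

Lemma ge_eps (R : realType) (x c : R) :
  (forall e, 0 < e -> exists s, c - e < s /\ s <= x) -> c <= x.
Proof.
move=> H; rewrite leNgt; apply/negP => hx.
have [s [h1 h2]] : exists s, c - (c - x) < s /\ s <= x by apply: H; rewrite subr_gt0.
lra.
Qed.

Lemma prUle (R : realType) (d : measure_display) (T : measurableType d)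
  (P : probability T R) (U : T -> R) r : measurable_fun setT U ->
  (forall r : R, 0 <= r <= 1 -> P [set t | U t <= r] = r%:E) ->
  0 <= r <= 1 -> pr P [set t | U t <= r] = r.
Proof.
move=> mU hU hr; apply: EFin_inj; rewrite -prE ?hU //.
exact: (mpre mU (mle r)).
Qed.

Lemma prUlt (R : realType) (d : measure_display) (T : measurableType d)
  (P : probability T R) (U : T -> R) c : measurable_fun setT U ->
  (forall r : R, 0 <= r <= 1 -> P [set t | U t <= r] = r%:E) ->
  0 <= c <= 1 -> pr P [set t | U t < c] = c.
Proof.
move=> mU hU /andP[c0 c1].
have mlt' : measurable [set t | U t < c] by exact: (mpre mU (mlt c)).
apply/eqP; rewrite eq_le; apply/andP; split.
  rewrite -[leRHS](prUle mU hU (r := c)); last by rewrite c0 c1.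
  by apply: pr_le => //; [exact: (mpre mU (mle c))| move=> t /= /ltW].
apply: ge_eps => e e0.
have [hce|hce] := lerP 0 (c - e / 2).
  exists (c - e / 2); split; first by lra.
  rewrite -[leLHS](prUle mU hU (r := c - e / 2)); last by apply/andP; split; lra.
  apply: pr_le => //; first exact: (mpre mU (mle _)).
  by move=> t /= h; apply: (le_lt_trans h); lra.
exists 0; split; first by lra.
exact: pr_ge0.
Qed.

Lemma prUint (R : realType) (d : measure_display) (T : measurableType d)
  (P : probability T R) (U : T -> R) c g : measurable_fun setT U ->
  (forall r : R, 0 <= r <= 1 -> P [set t | U t <= r] = r%:E) ->
  0 <= c <= 1 -> 0 <= g <= 1 ->
  pr P (U @^-1` [set u | c <= u <= g]) = Num.max 0 (g - c).
Proof.
move=> mU hU hc hg.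
have [gc|cg] := ltP g c.
  have -> : U @^-1` [set u | c <= u <= g] = set0.
    apply/seteqP; split => t //= /andP[h1 h2]; lra.
  rewrite /pr measure0 /=; apply/esym/max_idPl; lra.
have mI : measurable (U @^-1` [set u | c <= u <= g]).
  apply: (mpre mU); rewrite (_ : [set u | c <= u <= g] = [set u | c <= u] `&` [set u | u <= g]).
    by apply: measurableI; [exact: mge| exact: mle].
  by apply/seteqP; split => u /=; [move/andP| move=> [-> ->]].
have mlt' : measurable [set t | U t < c] by exact: (mpre mU (mlt c)).
have E : [set t | U t <= g] = U @^-1` [set u | c <= u <= g] `|` [set t | U t < c].
  apply/seteqP; split => t /=.
    by move=> h; have [hct|hct] := lerP c (U t); [left; apply/andP| right].
  by case=> [/andP[_ ->]//| h]; apply: ltW; apply: (lt_le_trans h).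
have dj : U @^-1` [set u | c <= u <= g] `&` [set t | U t < c] = set0.
  by apply/seteqP; split => t //= [/andP[h1 _] h2]; lra.
have H := prU P mI mlt' dj.
rewrite -E prUle // prUlt // in H.
have -> : pr P (U @^-1` [set u | c <= u <= g]) = g - c by lra.
apply/esym/max_idPr; lra.
Qed.

Lemma mint (R : realType) (c g : R) : measurable [set u : R | c <= u <= g].
Proof.
rewrite (_ : [set u | c <= u <= g] = [set u | c <= u] `&` [set u | u <= g]).
  by apply: measurableI; [exact: mge| exact: mle].
by apply/seteqP; split => u /=; [move/andP| move=> [-> ->]].
Qed.

Definition Fs (R : realType) (T : Type) (W Y1 Y2 U : T -> R) (a1 a2 : R)
  (K L k l : nat) : set T :=
  W @^-1` [set 1] `&` Y1 @^-1` [set k%:R] `&` Y2 @^-1` [set l%:R] `&`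
  U @^-1` [set u | 1 - cdf a2 (L - l)%N <= u <= cdf a1 (K - k)%N].

Definition Gs (R : realType) (T : Type) (W Y1 Y2 U : T -> R) (a1 a2 : R)
  (K L : nat) : set T :=
  \big[setU/set0]_(k < K.+1) \big[setU/set0]_(l < L.+1) Fs W Y1 Y2 U a1 a2 K L k l.

Lemma mFs (R : realType) (d : measure_display) (T : measurableType d)
  (W Y1 Y2 U : T -> R) a1 a2 K L k l :
  measurable_fun setT W -> measurable_fun setT Y1 -> measurable_fun setT Y2 ->
  measurable_fun setT U -> measurable (Fs W Y1 Y2 U a1 a2 K L k l).
Proof.
move=> mW mY1 mY2 mU; rewrite /Fs.
apply: measurableI; last first.
  exact: (mpre mU (mint _ _)).
apply: measurableI; last exact: (mpre mY2 (measurable_set1 _)).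
apply: measurableI; last exact: (mpre mY1 (measurable_set1 _)).
exact: (mpre mW (measurable_set1 _)).
Qed.

Lemma prF (R : realType) (d : measure_display) (T : measurableType d)
  (P : probability T R) (W Y1 Y2 U : T -> R) lam1 lam2 th phi K L k l :
  0 < lam1 -> 0 < lam2 -> 0 <= th <= 1 ->
  BZIPm_inputs P W Y1 Y2 U lam1 lam2 th phi ->
  pr P (Fs W Y1 Y2 U (th * lam1) (th * lam2) K L k l) =
  (1 - phi) * pmf ((1 - th) * lam1) k * pmf ((1 - th) * lam2) l *
    Lf (th * lam1) (th * lam2) (K - k)%N (L - l)%N.
Proof.
move=> l1 l2 /andP[t0 t1] [mW mY1 mY2 mU [[hW1 hW0] hY1 hY2 hU hind]].
have a1 : 0 <= th * lam1 by apply: mulr_ge0 => //; exact: ltW.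
have a2 : 0 <= th * lam2 by apply: mulr_ge0 => //; exact: ltW.
set c := 1 - cdf (th * lam2) (L - l)%N.
set g := cdf (th * lam1) (K - k)%N.
have hc : 0 <= c <= 1.
  by rewrite /c; have := cdf_ge0 (L - l)%N a2; have := cdf_le1 (L - l)%N a2; 
     move=> *; apply/andP; split; lra.
have hg : 0 <= g <= 1 by rewrite /g cdf_ge0 ?cdf_le1.
have mD : measurable (U @^-1` [set u | c <= u <= g]) by exact: (mpre mU (mint _ _)).
apply: EFin_inj; rewrite -prE; last exact: mFs.
rewrite /Fs hind; try exact: measurable_set1.
  rewrite (prE P mD) prUint //.
  rewrite [P (W @^-1` _)]hW1 [P (Y1 @^-1` _)]hY1 [P (Y2 @^-1` _)]hY2.
  rewrite -!EFinM; congr (_%:E); congr (_ * _).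
  by rewrite /Lf /c /g; congr (Num.max _ _); ring.
exact: mint.
Qed.

Lemma prG (R : realType) (d : measure_display) (T : measurableType d)
  (P : probability T R) (W Y1 Y2 U : T -> R) lam1 lam2 th phi K L :
  0 < lam1 -> 0 < lam2 -> 0 <= th <= 1 ->
  BZIPm_inputs P W Y1 Y2 U lam1 lam2 th phi ->
  pr P (Gs W Y1 Y2 U (th * lam1) (th * lam2) K L) =
  (1 - phi) * Phi ((1 - th) * lam1) ((1 - th) * lam2) (th * lam1) (th * lam2) K L.
Proof.
move=> l1 l2 ht hin.
have hin' := hin; case: hin' => mW mY1 mY2 mU _.
have mF k l := mFs (th * lam1) (th * lam2) K L k l mW mY1 mY2 mU.
rewrite /Gs (@pr_bigU _ _ _ P K.+1 (fun k => \big[setU/set0]_(l < L.+1) Fs W Y1 Y2 U (th * lam1) (th * lam2) K L k l)); first last.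
- move=> i j hij; apply/seteqP; split => t //=; rewrite -!bigcup_mkord.
  move=> [[l _ [[[_ h1] _] _]] [l' _ [[[_ h2] _] _]]].
  move: h1 h2; rewrite /preimage /= => -> /eqP; rewrite eqr_nat => hh.
  by move: hij; rewrite hh.
- by move=> i; apply: bigsetU_measurable => l _.
have inner i : pr P (\big[setU/set0]_(l < L.+1) Fs W Y1 Y2 U (th * lam1) (th * lam2) K L i l)
    = \sum_(l < L.+1) pr P (Fs W Y1 Y2 U (th * lam1) (th * lam2) K L i l).
  rewrite (@pr_bigU _ _ _ P L.+1 (fun l => Fs W Y1 Y2 U (th * lam1) (th * lam2) K L i l)) //.
  move=> j j' hjj; apply/seteqP; split => t //=.
  move=> [[[_ h1] _] [[_ h2] _]].
  move: h1 h2; rewrite /preimage /= => -> /eqP; rewrite eqr_nat => hh.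
  by move: hjj; rewrite hh.
under eq_bigr => i _ do rewrite inner.
rewrite /Phi big_mkord mulr_sumr; apply: eq_bigr => i _.
rewrite big_mkord mulr_sumr mulr_sumr; apply: eq_bigr => j _.
rewrite (prF _ _ _ _ l1 l2 ht hin); ring.
Qed.

Lemma mGs (R : realType) (d : measure_display) (T : measurableType d)
  (W Y1 Y2 U : T -> R) a1 a2 K L :
  measurable_fun setT W -> measurable_fun setT Y1 -> measurable_fun setT Y2 ->
  measurable_fun setT U -> measurable (Gs W Y1 Y2 U a1 a2 K L).
Proof.
move=> mW mY1 mY2 mU; apply: bigsetU_measurable => k _.
by apply: bigsetU_measurable => l _; apply: mFs.
Qed.

Lemma Gs_mem (R : realType) (T : Type) (W Y1 Y2 U : T -> R) a1 a2 K L t :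
  Gs W Y1 Y2 U a1 a2 K L t <->
  exists k l, [/\ (k < K.+1)%N, (l < L.+1)%N & Fs W Y1 Y2 U a1 a2 K L k l t].
Proof.
rewrite /Gs -(bigcup_mkord K.+1 (fun k => \big[setU/set0]_(l < L.+1) Fs W Y1 Y2 U a1 a2 K L k l)).
split.
  move=> [k hk]; rewrite /= -bigcup_mkord => -[l hl hF].
  by exists k, l.
move=> [k [l [hk hl hF]]]; exists k => //=; rewrite -bigcup_mkord; by exists l.
Qed.

Lemma prA0G (R : realType) (d : measure_display) (T : measurableType d)
  (P : probability T R) (W Y1 Y2 U : T -> R) lam1 lam2 th phi K L :
  0 < lam1 -> 0 < lam2 -> 0 <= th <= 1 ->
  BZIPm_inputs P W Y1 Y2 U lam1 lam2 th phi ->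
  pr P ([set t | W t = 0] `|` Gs W Y1 Y2 U (th * lam1) (th * lam2) K L) =
  phi + (1 - phi) * Phi ((1 - th) * lam1) ((1 - th) * lam2) (th * lam1) (th * lam2) K L.
Proof.
move=> l1 l2 ht hin.
have hin' := hin; case: hin' => mW mY1 mY2 mU [[hW1 hW0] _ _ _ _].
have mA0 : measurable [set t | W t = 0] by exact: (mpre mW (measurable_set1 0)).
rewrite prU //; last 2 first.
- exact: mGs.
- apply/seteqP; split => t //= [h0] /Gs_mem [k [l [_ _ [[[h1 _] _] _]]]].
  by move: h1; rewrite /preimage /= h0 => /eqP; rewrite eq_sym oner_eq0.
rewrite (prG _ _ l1 l2 ht hin); congr (_ + _).
by apply: EFin_inj; rewrite -prE.
Qed.

Lemma prYbad (R : realType) (d : measure_display) (T : measurableType d)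
  (P : probability T R) (Y : T -> R) (b : R) : 0 <= b ->
  measurable_fun setT Y ->
  (forall k : nat, P [set t | Y t = k%:R] = (pmf b k)%:E) ->
  measurable [set t | forall k : nat, Y t <> k%:R] /\
  pr P [set t | forall k : nat, Y t <> k%:R] = 0.
Proof.
move=> b0 mY hY.
have mS : measurable [set t | forall k : nat, Y t <> k%:R].
  rewrite (_ : [set t | _] = \bigcap_k (Y @^-1` (~` [set k%:R]))).
    by apply: bigcapT_measurable => k; apply: (mpre mY); apply: measurableC; exact: measurable_set1.
  by apply/seteqP; split => t /= h k; [move=> _; apply: h | apply: h].
split => //; apply/eqP; rewrite eq_le pr_ge0 // andbT.
apply: le0_eps => e e0; have [n hn] := cdf_near1 b0 e0.
exists (cdf b n); split => //.
have mk k : measurable [set t | Y t = k%:R] by exact: (mpre mY (measurable_set1 _)).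
have mB : measurable (\big[setU/set0]_(k < n.+1) [set t | Y t = k%:R]).
  by apply: bigsetU_measurable => k _.
have dj : [set t | forall k : nat, Y t <> k%:R] `&` \big[setU/set0]_(k < n.+1) [set t | Y t = k%:R] = set0.
  apply/seteqP; split => t //= [h].
  by rewrite -(bigcup_mkord n.+1 (fun k => [set t | Y t = k%:R])) => -[k _ hk]; apply: (h k).
have := prU P mS mB dj.
rewrite (@pr_bigU _ _ _ P n.+1 (fun k => [set t | Y t = k%:R])) //; last first.
  move=> i j hij; apply/seteqP; split => t //= [-> /eqP]; rewrite eqr_nat => hh.
  by move: hij; rewrite hh.
have -> : \sum_(i < n.+1) pr P [set t | Y t = i%:R] = cdf b n.
  rewrite /Defs.poisson_cdf; apply: eq_bigr => i _.
  by apply: EFin_inj; rewrite -prE // hY.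
move=> <-; apply: pr_le1; exact: measurableU.
Qed.

Lemma prWbad (R : realType) (d : measure_display) (T : measurableType d)
  (P : probability T R) (W : T -> R) (phi : R) :
  measurable_fun setT W ->
  P [set t | W t = 1] = (1 - phi)%:E -> P [set t | W t = 0] = phi%:E ->
  measurable [set t | W t <> 0 /\ W t <> 1] /\
  pr P [set t | W t <> 0 /\ W t <> 1] = 0.
Proof.
move=> mW hW1 hW0.
have mS : measurable [set t | W t <> 0 /\ W t <> 1].
  rewrite (_ : [set t | _] = W @^-1` (~` [set 0] `&` ~` [set 1])).
    by apply: (mpre mW); apply: measurableI; apply: measurableC; exact: measurable_set1.
  by apply/seteqP; split => t /=.
have m0 : measurable [set t | W t = 0] by exact: (mpre mW (measurable_set1 0)).
have m1 : measurable [set t | W t = 1] by exact: (mpre mW (measurable_set1 1)).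
have m01 : measurable ([set t | W t = 0] `|` [set t | W t = 1]) by exact: measurableU.
have d01 : [set t | W t = 0] `&` [set t | W t = 1] = set0.
  apply/seteqP; split => t //= [-> /eqP]; by rewrite eq_sym oner_eq0.
have dj : [set t | W t <> 0 /\ W t <> 1] `&` ([set t | W t = 0] `|` [set t | W t = 1]) = set0.
  by apply/seteqP; split => t //= [[h0 h1] [|]].
have H := prU P mS m01 dj; have H2 := prU P m0 m1 d01.
have e0 : pr P [set t | W t = 0] = phi by apply: EFin_inj; rewrite -prE.
have e1 : pr P [set t | W t = 1] = 1 - phi by apply: EFin_inj; rewrite -prE.
have mall : measurable ([set t | W t <> 0 /\ W t <> 1] `|` ([set t | W t = 0] `|` [set t | W t = 1])).
  exact: measurableU.
have := pr_le1 P mall; rewrite H H2 e0 e1 => hle.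
split => //; apply/eqP; rewrite eq_le pr_ge0 // andbT; lra.
Qed.

Lemma prU0 (R : realType) (d : measure_display) (T : measurableType d)
  (P : probability T R) (U : T -> R) : measurable_fun setT U ->
  (forall r : R, 0 <= r <= 1 -> P [set t | U t <= r] = r%:E) ->
  measurable [set t | U t <= 0] /\ pr P [set t | U t <= 0] = 0.
Proof.
move=> mU hU; split; first exact: (mpre mU (mle 0)).
by apply: prUle => //; rewrite lexx ler01.
Qed.

Lemma prU1 (R : realType) (d : measure_display) (T : measurableType d)
  (P : probability T R) (U : T -> R) : measurable_fun setT U ->
  (forall r : R, 0 <= r <= 1 -> P [set t | U t <= r] = r%:E) ->
  measurable [set t | 1 <= U t] /\ pr P [set t | 1 <= U t] = 0.
Proof.
move=> mU hU.
have mS : measurable [set t | 1 <= U t] by exact: (mpre mU (mge 1)).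
split => //; apply/eqP; rewrite eq_le pr_ge0 // andbT.
apply: le0_eps => e e0.
have key r : 0 <= r < 1 -> pr P [set t | 1 <= U t] + r <= 1.
  move=> /andP[r0 r1].
  have mr : measurable [set t | U t <= r] by exact: (mpre mU (mle r)).
  have dj : [set t | 1 <= U t] `&` [set t | U t <= r] = set0.
    by apply/seteqP; split => t //= [h1 h2]; lra.
  rewrite -[X in _ + X](prUle mU hU (r := r)); last by apply/andP; split; lra.
  by rewrite -prU //; apply: pr_le1; exact: measurableU.
have [h|h] := lerP 0 (1 - e / 2).
  by exists (1 - e / 2); split; [lra| apply: key; apply/andP; split; lra].
by exists 0; split; [lra| apply: key; rewrite lexx ltr01].
Qed.

Definition Bad (R : realType) (T : Type) (W Y1 Y2 U : T -> R) : set T :=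
  [set t | W t <> 0 /\ W t <> 1] `|` [set t | forall k : nat, Y1 t <> k%:R]
  `|` [set t | forall k : nat, Y2 t <> k%:R] `|` [set t | U t <= 0]
  `|` [set t | 1 <= U t].

Lemma Bad_null (R : realType) (d : measure_display) (T : measurableType d)
  (P : probability T R) (W Y1 Y2 U : T -> R) lam1 lam2 th phi :
  0 < lam1 -> 0 < lam2 -> 0 <= th <= 1 ->
  BZIPm_inputs P W Y1 Y2 U lam1 lam2 th phi ->
  measurable (Bad W Y1 Y2 U) /\ pr P (Bad W Y1 Y2 U) = 0.
Proof.
move=> l1 l2 /andP[t0 t1] [mW mY1 mY2 mU [[hW1 hW0] hY1 hY2 hU _]].
have b1 : 0 <= (1 - th) * lam1 by apply: mulr_ge0; [lra| exact: ltW].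
have b2 : 0 <= (1 - th) * lam2 by apply: mulr_ge0; [lra| exact: ltW].
have [mA pA] := prWbad mW hW1 hW0.
have [mB pB] := prYbad b1 mY1 hY1.
have [mC pC] := prYbad b2 mY2 hY2.
have [mD pD] := prU0 mU hU.
have [mE pE] := prU1 mU hU.
have mABC : measurable ([set t | W t <> 0 /\ W t <> 1] `|` [set t | forall k : nat, Y1 t <> k%:R]
  `|` [set t | forall k : nat, Y2 t <> k%:R]) by repeat apply: measurableU.
have mABCD : measurable ([set t | W t <> 0 /\ W t <> 1] `|` [set t | forall k : nat, Y1 t <> k%:R]
  `|` [set t | forall k : nat, Y2 t <> k%:R] `|` [set t | U t <= 0]) by repeat apply: measurableU.
have mAll : measurable (Bad W Y1 Y2 U) by repeat apply: measurableU.
split => //; apply/eqP; rewrite eq_le pr_ge0 // andbT.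
apply: (le_trans (pr_subU P mABCD mE)); rewrite pE addr0.
apply: (le_trans (pr_subU P mABC mD)); rewrite pD addr0.
have mAB : measurable ([set t | W t <> 0 /\ W t <> 1] `|` [set t | forall k : nat, Y1 t <> k%:R]) by repeat apply: measurableU.
apply: (le_trans (pr_subU P mAB mC)).
rewrite pC addr0.
by apply: (le_trans (pr_subU P mA mB)); rewrite pA pB addr0.
Qed.

Lemma notBad (R : realType) (T : Type) (W Y1 Y2 U : T -> R) t :
  ~ Bad W Y1 Y2 U t ->
  [/\ W t = 0 \/ W t = 1, exists k : nat, Y1 t = k%:R,
      exists l : nat, Y2 t = l%:R & 0 < U t < 1].
Proof.
move=> nb; split.
- case: (pselect (W t = 0)) => h0; first by left.
  case: (pselect (W t = 1)) => h1; first by right.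
  by exfalso; apply: nb; do 4 left.
- case: (pselect (exists k : nat, Y1 t = k%:R)) => // h.
  by exfalso; apply: nb; do 3 left; right => k hk; apply: h; exists k.
- case: (pselect (exists k : nat, Y2 t = k%:R)) => // h.
  by exfalso; apply: nb; do 2 left; right => k hk; apply: h; exists k.
- apply/andP; split; rewrite ltNge; apply/negP => h; apply: nb.
    by left; right.
  by right.
Qed.

Definition Ev (R : realType) (T : Type) (W Y1 Y2 U : T -> R) lam1 lam2 th (x1 x2 : R) :
  set T :=
  [set t | BZIPm_X1 W Y1 U lam1 th t <= x1 /\ BZIPm_X2 W Y2 U lam2 th t <= x2].

Lemma mEv (R : realType) (d : measure_display) (T : measurableType d)
  (P : probability T R) (W Y1 Y2 U : T -> R) lam1 lam2 th phi x1 x2 :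
  0 < lam1 -> 0 < lam2 -> 0 <= th <= 1 ->
  BZIPm_inputs P W Y1 Y2 U lam1 lam2 th phi ->
  measurable (Ev W Y1 Y2 U lam1 lam2 th x1 x2).
Proof.
move=> l1 l2 /andP[t0 t1] [mW mY1 mY2 mU _].
have a1 : 0 <= th * lam1 by apply: mulr_ge0 => //; exact: ltW.
have a2 : 0 <= th * lam2 by apply: mulr_ge0 => //; exact: ltW.
by apply: mE; [apply: mX1| apply: mX2].
Qed.

Lemma nat_aux (k K q : nat) : (k < K.+1)%N -> (q <= K - k)%N -> (k + q <= K)%N.
Proof. by move=> hk hq; rewrite -[leqRHS](subnKC (ltnSE hk)) leq_add2l. Qed.

Lemma LB (R : realType) (d : measure_display) (T : measurableType d)
  (P : probability T R) (W Y1 Y2 U : T -> R) lam1 lam2 th phi x1 x2 (K L : nat) :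
  0 < lam1 -> 0 < lam2 -> 0 <= th <= 1 ->
  BZIPm_inputs P W Y1 Y2 U lam1 lam2 th phi ->
  K%:R <= x1 -> L%:R <= x2 ->
  phi + (1 - phi) * Phi ((1 - th) * lam1) ((1 - th) * lam2) (th * lam1) (th * lam2) K L
  <= pr P (Ev W Y1 Y2 U lam1 lam2 th x1 x2).
Proof.
move=> l1 l2 ht hin hx1 hx2.
rewrite -(prA0G _ _ l1 l2 ht hin).
have hin' := hin; case: hin' => mW mY1 mY2 mU _.
apply: pr_le; last 1 first.
- move=> t [h0|/Gs_mem [k [l [hk hl [[[hW hY1] hY2] hUt]]]]].
    rewrite /Ev /BZIPm_X1 /BZIPm_X2 /= h0 !mul0r; split.
      by apply: le_trans hx1.
    by apply: le_trans hx2.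
  move: hW hY1 hY2 hUt; rewrite /preimage /= => hW hY1 hY2 /andP[hu1 hu2].
  rewrite /Ev /BZIPm_X1 /BZIPm_X2 /= hW hY1 hY2 !mul1r -!natrD; split.
    apply: le_trans hx1; rewrite ler_nat.
    by have := q_le hu2; apply: nat_aux.
  apply: le_trans hx2; rewrite ler_nat.
  have : 1 - U t <= cdf (th * lam2) (L - l)%N by lra.
  by move=> /q_le; apply: nat_aux.
- apply: measurableU; last exact: mGs.
  exact: (mpre mW (measurable_set1 0)).
- exact: (mEv x1 x2 l1 l2 ht hin).
Qed.

Lemma nat_aux2 (R : realType) (k K q : nat) : ((k + q)%:R : R) < K.+1%:R -> (k < K.+1)%N /\ (q <= K - k)%N.
Proof.
rewrite ltr_nat ltnS => h; split; first by apply: leq_trans (leq_addr _ _) h; rewrite ltnS.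
by rewrite leq_subRL // (leq_trans (leq_addr _ _) h).
Qed.

Lemma UB (R : realType) (d : measure_display) (T : measurableType d)
  (P : probability T R) (W Y1 Y2 U : T -> R) lam1 lam2 th phi x1 x2 (K L : nat) :
  0 < lam1 -> 0 < lam2 -> 0 <= th <= 1 ->
  BZIPm_inputs P W Y1 Y2 U lam1 lam2 th phi ->
  x1 < K.+1%:R -> x2 < L.+1%:R ->
  pr P (Ev W Y1 Y2 U lam1 lam2 th x1 x2) <=
  phi + (1 - phi) * Phi ((1 - th) * lam1) ((1 - th) * lam2) (th * lam1) (th * lam2) K L.
Proof.
move=> l1 l2 ht hin hx1 hx2.
have t0 : 0 <= th by case/andP: ht.
have a1 : 0 <= th * lam1 by apply: mulr_ge0 => //; exact: ltW.
have a2 : 0 <= th * lam2 by apply: mulr_ge0 => //; exact: ltW.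
rewrite -(prA0G _ _ l1 l2 ht hin).
have hin' := hin; case: hin' => mW mY1 mY2 mU _.
have [mB pB] := Bad_null l1 l2 ht hin.
have mAG : measurable ([set t | W t = 0] `|` Gs W Y1 Y2 U (th * lam1) (th * lam2) K L).
  apply: measurableU; last exact: mGs.
  exact: (mpre mW (measurable_set1 0)).
have mAll := measurableU _ _ mAG mB.
suff incl : Ev W Y1 Y2 U lam1 lam2 th x1 x2 `<=`
    ([set t | W t = 0] `|` Gs W Y1 Y2 U (th * lam1) (th * lam2) K L) `|` Bad W Y1 Y2 U.
  apply: (le_trans (pr_le P (mEv x1 x2 l1 l2 ht hin) mAll incl)).
  by apply: (le_trans (pr_subU P mAG mB)); rewrite pB addr0.
move=> t [h1 h2].
case: (pselect (Bad W Y1 Y2 U t)) => hb; first by right.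
left; have [[hw|hw] [k hk] [l hl] /andP[u0 u1]] := notBad hb; first by left.
right; apply/Gs_mem.
move: h1 h2; rewrite /BZIPm_X1 /BZIPm_X2 hw hk hl !mul1r -!natrD => h1 h2.
have [hkK hq1] := nat_aux2 (le_lt_trans h1 hx1).
have [hlL hq2] := nat_aux2 (le_lt_trans h2 hx2).
exists k, l; split => //.
have g1 := q_ge a1 u1 hq1.
have hu' : 1 - U t < 1 by lra.
have g2 := q_ge a2 hu' hq2.
rewrite /Fs /preimage /=; split; [split; [split|] |] => //.
apply/andP; split => //; lra.
Qed.

Lemma UB0 (R : realType) (d : measure_display) (T : measurableType d)
  (P : probability T R) (W Y1 Y2 U : T -> R) lam1 lam2 th phi x1 x2 :
  0 < lam1 -> 0 < lam2 -> 0 <= th <= 1 ->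
  BZIPm_inputs P W Y1 Y2 U lam1 lam2 th phi ->
  x1 < 0 \/ x2 < 0 ->
  pr P (Ev W Y1 Y2 U lam1 lam2 th x1 x2) <= 0.
Proof.
move=> l1 l2 ht hin hx.
have [mB pB] := Bad_null l1 l2 ht hin.
rewrite -pB; apply: pr_le => //; first exact: (mEv x1 x2 l1 l2 ht hin).
move=> t [h1 h2].
case: (pselect (Bad W Y1 Y2 U t)) => // hb; exfalso.
have [[hw|hw] [k hk] [l hl] _] := notBad hb.
  move: h1 h2; rewrite /BZIPm_X1 /BZIPm_X2 hw !mul0r => h1 h2.
  by case: hx => hx; lra.
move: h1 h2; rewrite /BZIPm_X1 /BZIPm_X2 hw hk hl !mul1r -!natrD => h1 h2.
have := ler0n R (k + qf (th * lam1) (U t)).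
have := ler0n R (l + qf (th * lam2) (1 - U t)).
by case: hx => hx; lra.
Qed.


Unset Implicit Arguments.

Theorem corollary2 (R : realType)
  (d : measure_display) (T : measurableType d) (P : probability T R)
  (W Y1 Y2 U : T -> R)
  (d' : measure_display) (T' : measurableType d') (P' : probability T' R)
  (W' Y1' Y2' U' : T' -> R)
  (lam1 lam2 theta theta' phi : R) :
  0 < lam1 -> 0 < lam2 -> 0 <= phi < 1 ->
  0 <= theta -> theta < theta' -> theta' <= 1 ->
  BZIPm_inputs P W Y1 Y2 U lam1 lam2 theta phi ->
  BZIPm_inputs P' W' Y1' Y2' U' lam1 lam2 theta' phi ->
  forall x1 x2 : R,
    (joint_cdf P' (BZIPm_X1 W' Y1' U' lam1 theta') (BZIPm_X2 W' Y2' U' lam2 theta') x1 x2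
     <= joint_cdf P (BZIPm_X1 W Y1 U lam1 theta) (BZIPm_X2 W Y2 U lam2 theta) x1 x2)%E.
Proof.
move=> l1 l2 /andP[p0 p1] t0 tt t1 hin hin' x1 x2.
have ht : 0 <= theta <= 1 by apply/andP; split; lra.
have ht' : 0 <= theta' <= 1 by apply/andP; split; lra.
rewrite /joint_cdf.
change (P' (Ev W' Y1' Y2' U' lam1 lam2 theta' x1 x2) <=
        P (Ev W Y1 Y2 U lam1 lam2 theta x1 x2))%E.
rewrite (prE P' (mEv x1 x2 l1 l2 ht' hin')) (prE P (mEv x1 x2 l1 l2 ht hin)) lee_fin.
case: (pselect (x1 < 0 \/ x2 < 0)) => hx.
  apply: (le_trans (UB0 l1 l2 ht' hin' hx)); apply: pr_ge0.
  exact: (mEv x1 x2 l1 l2 ht hin).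
have x10 : 0 <= x1 by rewrite leNgt; apply/negP => h; apply: hx; left.
have x20 : 0 <= x2 by rewrite leNgt; apply/negP => h; apply: hx; right.
set K := Num.Def.trunc x1; set L := Num.Def.trunc x2.
have hK1 : K%:R <= x1 by rewrite /K truncn_le.
have hL1 : L%:R <= x2 by rewrite /L truncn_le.
have hK2 : x1 < K.+1%:R by rewrite -truncn_le_nat.
have hL2 : x2 < L.+1%:R by rewrite -truncn_le_nat.
apply: (le_trans (UB l1 l2 ht' hin' hK2 hL2)).
apply: le_trans (LB l1 l2 ht hin hK1 hL1).
rewrite lerD2l; apply: ler_wpM2l; first lra.
have c1 : 0 <= (theta' - theta) * lam1 by apply: mulr_ge0; lra.
have c2 : 0 <= (theta' - theta) * lam2 by apply: mulr_ge0; lra.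
have b1 : 0 <= (1 - theta') * lam1 by apply: mulr_ge0; lra.
have b2 : 0 <= (1 - theta') * lam2 by apply: mulr_ge0; lra.
have a1 : 0 <= theta * lam1 by apply: mulr_ge0; lra.
have a2 : 0 <= theta * lam2 by apply: mulr_ge0; lra.
have e1 : theta' * lam1 = theta * lam1 + (theta' - theta) * lam1 by ring.
have e2 : theta' * lam2 = theta * lam2 + (theta' - theta) * lam2 by ring.
have e3 : (1 - theta) * lam1 = (1 - theta') * lam1 + (theta' - theta) * lam1 by ring.
have e4 : (1 - theta) * lam2 = (1 - theta') * lam2 + (theta' - theta) * lam2 by ring.
rewrite e1 e2 e3 e4; exact: Phi_mono.
Qed.
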